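(* Let $R$ be an almost Dedekind domain. Then $\mathrm{Crit}_\alpha(R)\subseteq\partial^\alpha(\mathcal{M})$ for every ordinal $\alpha$.
   Context: $R$ almost Dedekind: $R_M$ is a DVR for each maximal $M$; $K$ quotient field. $\mathcal{M}$ is $\mathrm{Max}(R)$ with the inverse topology (restriction of the coarsest topology on $\mathrm{Spec}(R)$ in which Zariski-open Zariski-compact sets are closed). For a space $X$: $\partial^0(X)=X$, $\partial^{\gamma+1}(X)$ is the set of non-isolated points of $\partial^\gamma(X)$ (subspace topology), $\partial^\lambda(X)=\bigcap_{\beta<\lambda}\partial^\beta(X)$ for limit $\lambda$. A maximal ideal $M$ of an almost Dedekind domain $A$ is critical if every finitely generated ideal $J\subseteq M$ satisfies $J\subseteq N^2$ for some maximal $N$; $\mathrm{Crit}(A)$ is the set of these. Recursively: $\mathrm{Crit}_0(R)=\mathrm{Max}(R)$, $T_0=R$; $\mathrm{Crit}_{\gamma+1}(R)=\{P\in\mathrm{Max}(R)\mid PT_\gamma\in\mathrm{Crit}(T_\gamma)\}$; $\mathrm{Crit}_\lambda(R)=\bigcap_{\gamma<\lambda}\mathrm{Crit}_\gamma(R)$ for limit $\lambda$; $T_\alpha=\bigcap\{R_P\mid P\in\mathrm{Crit}_\alpha(R)\}$ ($=K$ if empty). *)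

(* Defs.v *)
From HB Require Import structures.
From mathcomp Require Import all_boot all_order all_algebra.
From mathcomp Require Import boolp classical_sets.
Set Implicit Arguments. Unset Strict Implicit. Unset Printing Implicit Defensive.
Import Order.TTheory GRing.Theory Num.Theory.
Local Open Scope ring_scope.
Local Open Scope classical_set_scope.

Section AlmostDedekind.
Variable K : fieldType.

(** Rings are represented as subrings of the field K. *)
Definition is_subring (A : set K) : Prop :=
  A 1 /\ (forall x y, A x -> A y -> A (x - y)) /\
  (forall x y, A x -> A y -> A (x * y)).

Definition is_quotient_field_of (A : set K) : Prop :=
  forall x : K, exists a b, A a /\ A b /\ b != 0 /\ x = a / b.

Definition is_ideal (A I : set K) : Prop :=
  I `<=` A /\ I 0 /\ (forall x y, I x -> I y -> I (x + y)) /\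
  (forall a x, A a -> I x -> I (a * x)).

Definition is_prime_ideal (A P : set K) : Prop :=
  is_ideal A P /\ ~ P 1 /\
  (forall x y, A x -> A y -> P (x * y) -> P x \/ P y).

Definition is_maximal_ideal (A M : set K) : Prop :=
  is_ideal A M /\ ~ M 1 /\
  (forall J, is_ideal A J -> M `<=` J -> J = M \/ J = A).

Definition Spec (A : set K) : set (set K) := [set P | is_prime_ideal A P].
Definition Max (A : set K) : set (set K) := [set M | is_maximal_ideal A M].

Definition ideal_gen (A S : set K) : set K :=
  [set x | forall I, is_ideal A I -> S `<=` I -> I x].

Definition ideal_sq (A N : set K) : set K :=
  ideal_gen A [set x | exists a b, N a /\ N b /\ x = a * b].

Definition localization (A M : set K) : set K :=
  [set x | exists a s, A a /\ A s /\ ~ M s /\ x = a / s].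

Definition is_DVR (V : set K) : Prop :=
  exists v : K -> int,
    (forall x y, x != 0 -> y != 0 -> v (x * y) = v x + v y) /\
    (forall x y, x != 0 -> y != 0 -> x + y != 0 ->
        Num.min (v x) (v y) <= v (x + y)) /\
    (forall n : int, exists x, x != 0 /\ v x = n) /\
    V = [set x | x = 0 \/ (x != 0 /\ 0 <= v x)].

Definition almost_dedekind (A : set K) : Prop :=
  is_subring A /\ forall M, is_maximal_ideal A M -> is_DVR (localization A M).

Definition Crit (A : set K) : set (set K) :=
  [set M | is_maximal_ideal A M /\
     forall s : seq K, (forall x, x \in s -> A x) ->
       ideal_gen A [set x | x \in s] `<=` M ->
       exists N, is_maximal_ideal A N /\
                 ideal_gen A [set x | x \in s] `<=` ideal_sq A N].

(** T = intersection of R_P over P in C (= K if C is empty) *)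
Definition T_of (R : set K) (C : set (set K)) : set K :=
  [set x | forall P, C P -> localization R P x].

Definition zariski_open (A : set K) (U : set (set K)) : Prop :=
  exists S, S `<=` A /\ U = [set P | Spec A P /\ ~ (S `<=` P)].

Definition zariski_compact (A : set K) (U : set (set K)) : Prop :=
  forall F : set (set (set K)), (forall V, F V -> zariski_open A V) ->
    U `<=` \bigcup_(V in F) V ->
    exists (n : nat) (f : nat -> set (set K)),
      (forall i, (i < n)%N -> F (f i)) /\
      U `<=` [set P | exists i, (i < n)%N /\ f i P].

Definition is_topology {X : Type} (Y : set X) (O : set (set X)) : Prop :=
  (forall U, O U -> U `<=` Y) /\ O Y /\ O set0 /\
  (forall F, F `<=` O -> O (\bigcup_(U in F) U)) /\
  (forall U V, O U -> O V -> O (U `&` V)).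

Definition generated_open {X : Type} (Y : set X) (S : set (set X))
  (U : set X) : Prop :=
  forall O, is_topology Y O -> S `<=` O -> O U.

Definition inverse_open (A : set K) (U : set (set K)) : Prop :=
  generated_open (Spec A)
    [set W | exists V, zariski_open A V /\ zariski_compact A V /\
                       W = Spec A `\` V] U.

Definition nonisolated (A : set K) (B : set (set K)) : set (set K) :=
  [set x | B x /\ forall U, inverse_open A U -> U x ->
                 exists y, B y /\ U y /\ y <> x].

(** Well-orders (standing in for ordinals) *)
Definition is_wellorder {W : Type} (lt : W -> W -> Prop) : Prop :=
  (forall x y z, lt x y -> lt y z -> lt x z) /\ (forall x, ~ lt x x) /\
  (forall x y, lt x y \/ x = y \/ lt y x) /\ well_founded lt.

Definition is_zero {W : Type} (lt : W -> W -> Prop) (w : W) : Prop :=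
  forall u, ~ lt u w.
Definition is_succ_of {W : Type} (lt : W -> W -> Prop) (v w : W) : Prop :=
  lt v w /\ forall u, ~ (lt v u /\ lt u w).
Definition is_limit {W : Type} (lt : W -> W -> Prop) (w : W) : Prop :=
  ~ is_zero lt w /\ forall v, ~ is_succ_of lt v w.

(** C w = Crit_w(R), defined by transfinite recursion along lt *)
Definition crit_seq (R : set K) {W : Type} (lt : W -> W -> Prop)
  (C : W -> set (set K)) : Prop :=
  forall w,
    (is_zero lt w -> C w = Max R) /\
    (forall v, is_succ_of lt v w ->
       C w = [set P | Max R P /\
                Crit (T_of R (C v)) (ideal_gen (T_of R (C v)) P)]) /\
    (is_limit lt w -> C w = [set P | forall v, lt v w -> C v P]).

(** D w = partial^w(M), Cantor-Bendixson derivatives of Max(R) *)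
Definition deriv_seq (R : set K) {W : Type} (lt : W -> W -> Prop)
  (D : W -> set (set K)) : Prop :=
  forall w,
    (is_zero lt w -> D w = Max R) /\
    (forall v, is_succ_of lt v w -> D w = nonisolated R (D v)) /\
    (is_limit lt w -> D w = [set P | forall v, lt v w -> D v P]).

End AlmostDedekind.

(* Main.v *)
Require Import Defs.
From HB Require Import structures.
From mathcomp Require Import all_boot all_order all_algebra.
From mathcomp Require Import boolp classical_sets.
From mathcomp Require Import ring zify.
Set Implicit Arguments. Unset Strict Implicit. Unset Printing Implicit Defensive.
Import Order.TTheory GRing.Theory Num.Theory.
Local Open Scope ring_scope.
Local Open Scope classical_set_scope.

Section H.
Variable K : fieldType.
Implicit Types (A R I M P Q N S T : set K).

Lemma sr0 A : is_subring A -> A 0.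
Proof. by move=> [h1 [hB _]]; rewrite -(subrr 1); apply: hB. Qed.
Lemma srN A x : is_subring A -> A x -> A (- x).
Proof. move=> hA hx; rewrite -sub0r; case: (hA) => [_ [hB _]]; apply: hB => //; exact: sr0. Qed.
Lemma srD A x y : is_subring A -> A x -> A y -> A (x + y).
Proof. move=> hA hx hy; rewrite -[y]opprK; case: (hA) => [_ [hB _]]; apply: hB => //; exact: srN. Qed.
Lemma srM A x y : is_subring A -> A x -> A y -> A (x * y).
Proof. by move=> [_ [_ hM]]; apply: hM. Qed.
Lemma sr1 A : is_subring A -> A 1.
Proof. by case. Qed.
Lemma srX A x n : is_subring A -> A x -> A (x ^+ n).
Proof. move=> hA hx; elim: n => [|n IH]; first by rewrite expr0; exact: sr1.
by rewrite exprS; apply: srM. Qed.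

Lemma ig_sub A S : S `<=` ideal_gen A S.
Proof. by move=> x Sx I _ SI; apply: SI. Qed.
Lemma ig_min A S I : is_ideal A I -> S `<=` I -> ideal_gen A S `<=` I.
Proof. by move=> hI SI x; apply. Qed.

Lemma ideal_one A I : is_ideal A I -> I 1 -> forall x, A x -> I x.
Proof. by move=> [_ [_ [_ hm]]] h1 x Ax; rewrite -[x]mulr1; apply: hm. Qed.

Lemma max_prime A M : is_subring A -> is_maximal_ideal A M -> is_prime_ideal A M.
Proof.
move=> hA [hI [h1 hmax]]; split=> //; split=> // x y Ax Ay Mxy.
case: (pselect (M x)) => Mx; [by left|right].
have [IA [I0 [ID IM]]] := hI.
pose J := [set z | exists m a, M m /\ A a /\ z = m + a * x].
have hJ : is_ideal A J.
  split; [|split; [|split]].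
  - move=> z [m [a [Mm [Aa ->]]]]; apply: srD => //; [exact: IA|exact: srM].
  - by exists 0, 0; split=> //; split; [exact: sr0|rewrite mul0r addr0].
  - move=> z1 z2 [m1 [a1 [M1 [A1 ->]]]] [m2 [a2 [M2 [A2 ->]]]].
    exists (m1 + m2), (a1 + a2); split; first exact: ID.
    by split; [exact: srD|ring].
  - move=> b z Ab [m [a [Mm [Aa ->]]]]; exists (b * m), (b * a).
    by split; [exact: IM|split; [exact: srM|ring]].
have MJ : M `<=` J by move=> m Mm; exists m, 0; split=> //; split; [exact: sr0|ring].
case: (hmax J hJ MJ) => hJe.
- by exfalso; apply: Mx; rewrite -hJe; exists 0, 1; split=> //; split; [exact: sr1|ring].
- have : J 1 by rewrite hJe; exact: sr1.
  move=> [m [a [Mm [Aa e]]]].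
  have -> : y = y * m + a * (x * y) by rewrite -[y in LHS]mulr1 e; ring.
  by apply: ID; apply: IM.
Qed.


Lemma loc_of R P x : is_subring R -> is_prime_ideal R P -> R x -> localization R P x.
Proof.
move=> hR [[_ [_ _]] [h1 _]] Rx; exists x, 1; split=> //; split; first exact: sr1.
by split=> //; rewrite divr1.
Qed.

Lemma prime_nz R P s : is_prime_ideal R P -> ~ P s -> s != 0.
Proof. by move=> [[_ [P0 _]] _] h; apply/eqP => e; apply: h; rewrite e. Qed.

Lemma loc_D R P x y : is_subring R -> is_prime_ideal R P ->
  localization R P x -> localization R P y -> localization R P (x + y).
Proof.
move=> hR hP [a [s [Ra [Rs [Ps ->]]]]] [b [u [Rb [Ru [Pu ->]]]]].
have s0 := prime_nz hP Ps; have u0 := prime_nz hP Pu.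
exists (a * u + b * s), (s * u); split; first by apply: srD => //; apply: srM.
split; first exact: srM.
split; last by field; rewrite ?s0 ?u0 ?mulf_neq0.
move=> h; case: hP => [_ [_ hp]]; by case: (hp s u Rs Ru h).
Qed.

Lemma loc_M R P x y : is_subring R -> is_prime_ideal R P ->
  localization R P x -> localization R P y -> localization R P (x * y).
Proof.
move=> hR hP [a [s [Ra [Rs [Ps ->]]]]] [b [u [Rb [Ru [Pu ->]]]]].
have s0 := prime_nz hP Ps; have u0 := prime_nz hP Pu.
exists (a * b), (s * u); split; first by apply: srM.
split; first exact: srM.
split; last by field; rewrite ?s0 ?u0 ?mulf_neq0.
move=> h; case: hP => [_ [_ hp]]; by case: (hp s u Rs Ru h).
Qed.

Lemma T_sub R C : is_subring R -> (forall P, C P -> is_prime_ideal R P) ->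
  R `<=` T_of R C.
Proof. by move=> hR hC x Rx P CP; apply: loc_of => //; apply: hC. Qed.

Lemma T_subring R C : is_subring R -> (forall P, C P -> is_prime_ideal R P) ->
  is_subring (T_of R C).
Proof.
move=> hR hC; have RT := T_sub hR hC.
split; first exact: RT (sr1 hR).
split=> x y Tx Ty.
- have -> : x - y = x + (-1) * y by ring.
  move=> P CP; apply: loc_D => //; [exact: hC|exact: Tx|].
  apply: loc_M => //; [exact: hC| |exact: Ty].
  by apply: loc_of => //; [exact: hC|apply: srN => //; exact: sr1].
- by move=> P CP; apply: loc_M => //; [exact: hC|exact: Tx|exact: Ty].
Qed.

Lemma ideal_cap R T N : is_subring R -> R `<=` T -> is_ideal T N ->
  is_ideal R (N `&` R).
Proof.
move=> hR RT [NT [N0 [ND NM]]]; split; first by move=> x [].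
split; first by split=> //; exact: sr0.
split; first by move=> x y [Nx Rx] [Ny Ry]; split; [exact: ND|exact: srD].
by move=> a x Ra [Nx Rx]; split; [apply: NM => //; exact: RT|exact: srM].
Qed.


Definition val_at R M (v : K -> int) :=
  (forall x y, x != 0 -> y != 0 -> v (x * y) = v x + v y) /\
  (forall n : int, exists x, x != 0 /\ v x = n) /\
  localization R M = [set x | x = 0 \/ (x != 0 /\ 0 <= v x)] /\
  (forall x y, x != 0 -> y != 0 -> x + y != 0 ->
        Num.min (v x) (v y) <= v (x + y)).

Lemma dvr_at R M : almost_dedekind R -> is_maximal_ideal R M -> exists v, val_at R M v.
Proof.
move=> [_ h] hM; have [v [hm [ha [hs hV]]]] := h M hM; by exists v.
Qed.

Section Val.
Variables (R M : set K) (v : K -> int).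
Hypotheses (hR : is_subring R) (hM : is_maximal_ideal R M) (hv : val_at R M v).
Set Default Proof Using "All".

Lemma v1 : v 1 = 0.
Proof. have [hm _] := hv; have := hm 1 1 (oner_neq0 _) (oner_neq0 _); rewrite mulr1; lia. Qed.

Lemma vdiv x y : x != 0 -> y != 0 -> v (x / y) = v x - v y.
Proof.
move=> x0 y0; have [hm _] := hv.
have xy0 : x / y != 0 by rewrite mulf_neq0 // invr_eq0.
have := hm _ _ xy0 y0; rewrite divfK //; lia.
Qed.

Lemma locE x : localization R M x <-> x = 0 \/ 0 <= v x.
Proof.
have [_ [_ [hV _]]] := hv; rewrite hV /=; split; first by case=> [->|[]]; [left|right].
move=> [->|h]; first by left. by case: (eqVneq x 0) => [->|x0]; [left|right].
Qed.

Lemma Mprime : is_prime_ideal R M.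
Proof. exact: max_prime. Qed.

Lemma M0 : M 0.
Proof. by case: hM => [[_ [h _]] _]. Qed.

Lemma vR x : R x -> x != 0 -> 0 <= v x.
Proof.
move=> Rx x0; have : localization R M x by apply: loc_of => //; exact: Mprime.
by case/locE => // /eqP; rewrite (negbTE x0).
Qed.

Lemma vnotM x : R x -> ~ M x -> v x = 0.
Proof.
move=> Rx Mx; have x0 : x != 0 by apply/eqP => e; apply: Mx; rewrite e; exact: M0.
have hi : localization R M (x^-1).
  exists 1, x; split; first exact: sr1.
  by split=> //; split=> //; rewrite div1r.
have := vR Rx x0; have := vdiv (oner_neq0 _) x0; rewrite div1r v1.
case/locE: hi => [/eqP|]; first by rewrite invr_eq0 (negbTE x0).
lia.
Qed.

Lemma vM x : M x -> x != 0 -> 1 <= v x.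
Proof.
move=> Mx x0; have [[MR _] _] := hM.
have := vR (MR _ Mx) x0; case: (ltP 0 (v x)) => h1 h2; first by lia.
have ve : v x = 0 by lia.
have : localization R M (x^-1).
  apply/locE; right; rewrite -div1r vdiv ?oner_neq0 // v1 ve; lia.
move=> [a [s [Ra [Rs [Ms e]]]]].
have s0 : s != 0 by apply/eqP => e'; apply: Ms; rewrite e'; exact: M0.
exfalso; apply: Ms.
have -> : s = a * x.
  have := congr1 (fun z => z * x * s) e.
  by rewrite mulVf // mul1r => ->; field; rewrite s0.
by case: hM => [[_ [_ [_ hm]]] _]; apply: hm.
Qed.

Lemma vt : exists t, M t /\ t != 0 /\ v t = 1.
Proof.
have [_ [hs _]] := hv; have [y [y0 vy]] := hs 1.
have : localization R M y by apply/locE; right; rewrite vy.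
move=> [a [s [Ra [Rs [Ms e]]]]].
have s0 : s != 0 by apply/eqP => e'; apply: Ms; rewrite e'; exact: M0.
have a0 : a != 0 by apply: contraNneq y0 => a0; rewrite e a0 mul0r.
exists a; split; last split=> //.
- apply: contrapT => Ma; have := vnotM Ra Ma; have := vdiv a0 s0.
  rewrite -e vy (vnotM Rs Ms); lia.
- have := vdiv a0 s0; rewrite -e vy (vnotM Rs Ms); lia.
Qed.

End Val.


Lemma exists_max R I : is_subring R -> is_ideal R I -> ~ I 1 ->
  exists M, is_maximal_ideal R M /\ I `<=` M.
Proof.
move=> hR hI hI1.
pose P := [set J : set K | J = set0 \/ (is_ideal R J /\ I `<=` J /\ ~ J 1)].
have [|A [PA hmax]] := @Zorn_bigcup K P.
  move=> F FP tot.
  have FI : forall J y, F J -> J y -> is_ideal R J /\ I `<=` J /\ ~ J 1.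
    move=> J y FJ Jy; case: (FP J FJ) => // e; by rewrite e in Jy.
  case: (pselect (exists J x, F J /\ J x)) => hn; last first.
    left; apply/seteqP; split=> x //; move=> [J FJ Jx]; exfalso; apply: hn.
    by exists J, x.
  case: hn => J0 [x0 [FJ0 Jx0]]; have [hJ0 [IJ0 _]] := FI _ _ FJ0 Jx0.
  right; split; last split.
  - split; first by move=> x [J FJ Jx]; have [[h _] _] := FI _ _ FJ Jx; exact: h.
    split; first by exists J0 => //; case: hJ0 => [_ [h _]].
    split.
    + move=> x y [J1 FJ1 J1x] [J2 FJ2 J2y].
      case: (tot _ _ FJ1 FJ2) => sub.
      * exists J2 => //; have [[_ [_ [h _]]] _] := FI _ _ FJ2 J2y.
        by apply: h => //; exact: sub.
      * exists J1 => //; have [[_ [_ [h _]]] _] := FI _ _ FJ1 J1x.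
        by apply: h => //; exact: sub.
    + move=> a x Ra [J FJ Jx]; exists J => //.
      by have [[_ [_ [_ h]]] _] := FI _ _ FJ Jx; apply: h.
  - by move=> x Ix; exists J0 => //; exact: IJ0.
  - by move=> [J FJ J1]; have [_ [_ h]] := FI _ _ FJ J1.
case: PA => [A0|[hA [IA A1]]].
  exfalso; apply: (hmax I); last by rewrite /P /=; right; split; [exact: hI|split; [exact: subset_refl|exact: hI1]].
  rewrite A0; split=> // h; case: hI => [_ [I0 _]]; exact: h _ I0.
exists A; split=> //; split=> //; split=> // J hJ AJ.
case: (pselect (J 1)) => J1.
  right; apply/seteqP; split; first by case: hJ.
  by move=> x Rx; apply: (ideal_one hJ J1).
left; case: (pselect (J `<=` A)) => JA; first by apply/seteqP; split.
exfalso; apply: (hmax J); first by split.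
rewrite /P /=; right; split=> //; split=> //; exact: subset_trans AJ.
Qed.

Lemma prime_max R Q q : almost_dedekind R -> is_prime_ideal R Q -> Q q -> q != 0 ->
  is_maximal_ideal R Q.
Proof.
move=> hAD hQ Qq q0; have hR := hAD.1.
have [hQI [Q1 Qp]] := hQ.
have [M [hM QM]] := exists_max hR hQI Q1.
suff MQ : M `<=` Q by have -> : Q = M by apply/seteqP; split.
have [v hv] := dvr_at hAD hM.
have [[MR [M0' [MD MM]]] [M1 _]] := hM.
have QR : Q `<=` R by case: hQI.
move=> m Mm; case: (eqVneq m 0) => [->|m0]; first by case: hQI => [_ [h _]].
have vq : 1 <= v q := vM hR hM hv (QM _ Qq) q0.
have vm : 1 <= v m := vM hR hM hv Mm m0.
have [n hn] : exists n : nat, v q = n%:Z.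
  move: vq; case: (v q) => [n _|n //]; by exists n.
have vX : forall k : nat, v (m ^+ k) = k%:Z * v m.
  elim=> [|k IH]; first by rewrite expr0 (v1 hR hM hv) mul0r.
  have [hm _] := hv; rewrite exprS hm ?expf_neq0 // IH; lia.
have mn0 : m ^+ n != 0 by rewrite expf_neq0.
have : localization R M (m ^+ n / q).
  apply/(locE hR hM hv); right; rewrite (vdiv hR hM hv) // vX hn; nia.
move=> [r [s [Rr [Rs [Ms e]]]]].
have s0 : s != 0 by apply/eqP => e'; apply: Ms; rewrite e'.
have Qsm : Q (s * m ^+ n).
  have -> : s * m ^+ n = r * q.
    have := congr1 (fun z => z * q * s) e; rewrite divfK // mulrC => ->; field; by rewrite s0.
  by case: hQI => [_ [_ [_ h]]]; apply: h.
have Rm : R m := MR _ Mm.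
case: (Qp _ _ Rs (srX n hR Rm) Qsm) => [Qs|].
  by exfalso; apply: Ms; exact: QM.
elim: n {hn mn0 e Qsm} => [|n IH]; first by rewrite expr0.
rewrite exprS => h; case: (Qp _ _ Rm (srX n hR Rm) h) => //; exact: IH.
Qed.


Lemma KL R Q (C : set (set K)) N (s : seq K) : almost_dedekind R -> is_maximal_ideal R Q ->
  (forall x, x \in s -> Q x) -> (forall P, C P -> P 0) ->
  (forall P, C P -> exists j, j \in s /\ ~ P j) ->
  Q `<=` N -> (forall x a, T_of R C x -> N a -> N (x * a)) ->
  (forall x, N x -> R x -> Q x) -> False.
Proof.
move=> hAD hQ sQ C0 Cs QN NT NQ; have hR := hAD.1.
have [v hv] := dvr_at hAD hQ.
have [[QR [Q0 _]] [Q1 _]] := hQ.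
have [_ [_ Qp]] := Mprime hR hQ hv.
have claimA : forall s' : seq K, (forall x, x \in s' -> Q x) -> exists a, Q a /\ a != 0 /\
    forall j, j \in s' -> localization R Q (j / a).
  elim=> [|j s' IH] hs.
    have [t [Qt [t0 _]]] := vt hR hQ hv; by exists t.
  have [a' [Qa' [a0' ha']]] : exists a, Q a /\ a != 0 /\
      forall j, j \in s' -> localization R Q (j / a).
    by apply: IH => x xs; apply: hs; rewrite in_cons xs orbT.
  have Qj : Q j by apply: hs; rewrite in_cons eqxx.
  case: (eqVneq j 0) => [j0|j0].
    exists a'; split=> //; split=> // j''; rewrite in_cons => /orP[/eqP->|h].
      by apply/(locE hR hQ hv); left; rewrite j0 mul0r.
    exact: ha'.
  case: (leP (v a') (v j)) => hle.
    exists a'; split=> //; split=> // j''; rewrite in_cons => /orP[/eqP->|h].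
      apply/(locE hR hQ hv); right; rewrite (vdiv hR hQ hv) //; lia.
    exact: ha'.
  exists j; split=> //; split=> // j''; rewrite in_cons => /orP[/eqP->|h].
    by apply/(locE hR hQ hv); right; rewrite divff // (v1 hR hQ hv).
  apply/(locE hR hQ hv); case: (eqVneq j'' 0) => [->|j''0]; first by left; rewrite mul0r.
  right; have := ha' _ h; case/(locE hR hQ hv) => [/eqP|].
    by rewrite mulf_eq0 invr_eq0 (negbTE j''0) (negbTE a0').
  rewrite !(vdiv hR hQ hv) //; lia.
have [a [Qa [a0 ha]]] := claimA s sQ.
have claimB : forall s' : seq K, (forall x, x \in s' -> localization R Q (x / a)) ->
    exists sg, R sg /\ ~ Q sg /\ forall j, j \in s' -> R (sg * (j / a)).
  elim=> [|j s' IH] hs.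
    by exists 1; split; [exact: sr1|split=> //].
  have [sg' [Rsg' [Qsg' hsg']]] : exists sg, R sg /\ ~ Q sg /\
      forall j, j \in s' -> R (sg * (j / a)).
    by apply: IH => x xs; apply: hs; rewrite in_cons xs orbT.
  have : localization R Q (j / a) by apply: hs; rewrite in_cons eqxx.
  move=> [r [s1 [Rr [Rs1 [Qs1 e]]]]].
  have s10 : s1 != 0 by apply/eqP => e'; apply: Qs1; rewrite e'.
  exists (s1 * sg'); split; first exact: srM.
  split; first by move=> h; case: (Qp _ _ Rs1 Rsg' h).
  move=> j''; rewrite in_cons => /orP[/eqP->|h].
    rewrite e; have -> : s1 * sg' * (r / s1) = sg' * r by field.
    exact: srM.
  rewrite -mulrA; apply: srM => //; exact: hsg'.
have [sg [Rsg [Qsg hsg]]] := claimB s ha.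
have Tx : T_of R C (sg / a).
  move=> P CP; have [j [js Pj]] := Cs P CP.
  have j0 : j != 0 by apply/eqP => e; apply: Pj; rewrite e; exact: C0.
  exists (sg * (j / a)), j; split; first exact: hsg.
  split; first by apply: QR; apply: sQ.
  by split=> //; field; apply/andP.
apply: Qsg; apply: NQ => //.
have := NT _ _ Tx (QN _ Qa); by rewrite divfK.
Qed.


Definition bopen R (U : set (set K)) := U `<=` Spec R /\ forall P, U P ->
  exists s : seq K, (forall x, x \in s -> R x) /\ (forall x, x \in s -> P x) /\
    forall Q, Spec R Q -> (forall x, x \in s -> Q x) -> U Q.

Lemma bopen_top R : is_topology (Spec R) (bopen R).
Proof.
split; first by move=> U [].
split.
  split=> // P SP; exists [::]; split=> //; split=> //.
split; first by split=> // P [].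
split.
  move=> F FB; split; first by move=> P [U FU UP]; have [h _] := FB U FU; exact: h.
  move=> P [U FU UP]; have [_ h] := FB U FU; have [s [sR [sP hs]]] := h P UP.
  exists s; split=> //; split=> // Q SQ sQ; exists U => //; exact: hs.
move=> U V [US hU] [VS hV]; split; first by move=> P [UP _]; exact: US.
move=> P [UP VP]; have [s1 [s1R [s1P h1]]] := hU P UP.
have [s2 [s2R [s2P h2]]] := hV P VP.
exists (s1 ++ s2); split; first by move=> x; rewrite mem_cat => /orP[]; [exact: s1R|exact: s2R].
split; first by move=> x; rewrite mem_cat => /orP[]; [exact: s1P|exact: s2P].
move=> Q SQ sQ; split; [apply: h1 => // x xs|apply: h2 => // x xs];
  by apply: sQ; rewrite mem_cat xs ?orbT.
Qed.

Lemma sub_bopen R : [set W | exists V, zariski_open R V /\ zariski_compact R V /\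
                       W = Spec R `\` V] `<=` bopen R.
Proof.
move=> W [V [[S [SR eV]] [hc ->]]].
split; first by move=> P [].
move=> P [SP nV].
have SPs : S `<=` P.
  apply: contrapT => h; apply: nV; rewrite eV; by split.
pose D x := [set Q | Spec R Q /\ ~ [set x] `<=` Q].
pose F := [set U | exists x, S x /\ U = D x].
have hFo : forall U, F U -> zariski_open R U.
  move=> U [x [Sx ->]]; exists [set x]; split=> //.
  by move=> y ->; apply: SR.
have hFc : V `<=` \bigcup_(U in F) U.
  move=> Q; rewrite eV => -[SQ nSQ].
  have [x [Sx nQx]] : exists x, S x /\ ~ Q x.
    apply: contrapT => h; apply: nSQ => y Sy; apply: contrapT => nQy; apply: h.
    by exists y.
  exists (D x); first by exists x.
  by split=> // h; apply: nQx; apply: h.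
have [n [f [hf hcov]]] := hc F hFo hFc.
have [s [sS hs]] : exists s : seq K, (forall x, x \in s -> S x) /\
    forall i, (i < n)%N -> exists x, x \in s /\ f i = D x.
  elim: n hf {hcov} => [|n IH] hf.
    by exists [::]; split.
  have [|s [sS hs]] := IH; first by move=> i lt; apply: hf; apply: ltnW.
  have [x [Sx e]] := hf n (ltnSn n).
  exists (x :: s); split.
    by move=> y; rewrite in_cons => /orP[/eqP->|]; [|exact: sS].
  move=> i; rewrite ltnS leq_eqVlt => /orP[/eqP->|lt].
    by exists x; rewrite in_cons eqxx.
  have [y [ys ey]] := hs i lt; exists y; by rewrite in_cons ys orbT.
exists s; split; first by move=> x xs; apply: SR; apply: sS.
split; first by move=> x xs; apply: SPs; apply: sS.
move=> Q SQ sQ; split=> // hVQ.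
have [i [lt fiQ]] := hcov Q hVQ.
have [x [xs e]] := hs i lt; rewrite e in fiQ; case: fiQ => _ h; apply: h => y ->.
exact: sQ.
Qed.

Lemma TL R U P : inverse_open R U -> U P ->
  exists s : seq K, (forall x, x \in s -> R x) /\ (forall x, x \in s -> P x) /\
    forall Q, Spec R Q -> (forall x, x \in s -> Q x) -> U Q.
Proof.
move=> hU UP; have [_ h] := hU _ (bopen_top R) (@sub_bopen R); exact: h.
Qed.


Definition closedM R (D : set (set K)) := forall P, Max R P ->
  (forall U, inverse_open R U -> U P -> exists y, D y /\ U y) -> D P.

Lemma ideal_k R P v T (k : int) : val_at R P v -> 0 <= k -> is_subring T ->
  (forall z, T z -> z = 0 \/ 0 <= v z) ->
  is_ideal T [set z | T z /\ (z = 0 \/ k <= v z)].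
Proof.
move=> [hm [_ [_ ha]]] k0 hT Tv.
split; first by move=> z [].
split; first by split; [exact: sr0|left].
split.
  move=> x y [Tx hx] [Ty hy]; split; first exact: srD.
  case: hx => [->|hx]; first by rewrite add0r.
  case: hy => [->|hy]; first by rewrite addr0; right.
  case: (eqVneq x 0) => [->|x0]; first by rewrite add0r; right.
  case: (eqVneq y 0) => [->|y0]; first by rewrite addr0; right.
  case: (eqVneq (x + y) 0) => [->|xy0]; first by left.
  right; apply: le_trans (ha _ _ x0 y0 xy0); by rewrite le_min hx hy.
move=> a z Ta [Tz hz]; split; first exact: srM.
case: (eqVneq a 0) => [->|a0]; first by left; rewrite mul0r.
case: hz => [->|hz]; first by left; rewrite mulr0.
case: (eqVneq z 0) => [->|z0]; first by left; rewrite mulr0.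
right; rewrite hm //; case: (Tv a Ta) => [/eqP|va]; first by rewrite (negbTE a0).
lia.
Qed.


Lemma succ_step R (Cv Dv : set (set K)) P : almost_dedekind R ->
  Cv `<=` Max R -> Cv `<=` Dv -> closedM R Dv ->
  Max R P -> Crit (T_of R Cv) (ideal_gen (T_of R Cv) P) ->
  nonisolated R Dv P.
Proof.
move=> hAD CvM CvD hcl hP [[hPT [PT1 PTmax]] hcrit].
have hR := hAD.1.
set T := T_of R Cv in hPT PT1 PTmax hcrit *.
set PT := ideal_gen T P in hPT PT1 PTmax hcrit *.
have CvP : forall P', Cv P' -> is_prime_ideal R P' by move=> P' h; apply: max_prime => //; exact: CvM.
have RT : R `<=` T := T_sub hR CvP.
have hT : is_subring T := T_subring hR CvP.
have PPT : P `<=` PT by move=> x; exact: ig_sub.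
have [[PR [P0 [PD PM]]] [P1 Pmax]] := hP.
have PTRP : forall x, PT x -> R x -> P x.
  have hI := ideal_cap hR RT hPT.
  have PI : P `<=` PT `&` R by move=> x Px; split; [exact: PPT|exact: PR].
  case: (Pmax _ hI PI) => e x PTx Rx.
    by rewrite -e; split.
  by exfalso; apply: PT1; have : R 1 := sr1 hR; rewrite -e => -[].
have meet : forall Q N, is_maximal_ideal R Q -> Q `<=` N ->
    (forall x a, T x -> N a -> N (x * a)) -> (forall x, N x -> R x -> Q x) ->
    forall U, inverse_open R U -> U Q -> exists y, Dv y /\ U y.
  move=> Q N hQ QN NT NQ U hU UQ.
  have [s [sR [sQ hs]]] := TL hU UQ.
  case: (pselect (exists P', Cv P' /\ forall x, x \in s -> P' x)) => [[P' [CP' sP']]|no].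
    exists P'; split; first exact: CvD.
    by apply: hs => //; apply: max_prime => //; exact: CvM.
  exfalso; apply: (KL hAD hQ sQ _ _ QN NT NQ).
    by move=> P' CP'; have [[_ [h _]] _] := CvP P' CP'.
  move=> P' CP'; apply: contrapT => h; apply: no; exists P'; split=> // x xs.
  by apply: contrapT => nx; apply: h; exists x.
have PTmul : forall x a, T x -> PT a -> PT (x * a).
  by case: hPT => [_ [_ [_ h]]].
split.
  by apply: hcl => //; apply: (meet P PT hP PPT PTmul PTRP).
move=> U hU UP.
have [s [sR [sP hs]]] := TL hU UP.
have [v hv] := dvr_at hAD hP.
have [t [Pt [t0 vt1]]] := vt hR hP hv.
have h1 : forall x, x \in t :: s -> T x.
  by move=> x; rewrite in_cons => /orP[/eqP->|xs]; apply: RT; [exact: PR|exact: sR].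
have h2 : ideal_gen T [set` t :: s] `<=` PT.
  apply: ig_min => // x /=; rewrite in_cons => /orP[/eqP->|xs]; apply: PPT => //.
  exact: sP.
have [N [hN hsq]] := hcrit (t :: s) h1 h2.
have [hNI [N1 Nmax]] := hN.
have [NT [N0 [ND NM]]] := hNI.
have Nsq : ideal_sq T N `<=` N.
  apply: ig_min => // x [a [b [Na [Nb ->]]]]; apply: NM => //; exact: NT.
have sN : forall x, x \in t :: s -> N x.
  by move=> x xs; apply: Nsq; apply: hsq; apply: ig_sub.
have Nt : N t by apply: sN; rewrite in_cons eqxx.
pose Q := N `&` R.
have hQp : is_prime_ideal R Q.
  split; first exact: ideal_cap hR RT hNI.
  split; first by case.
  move=> x y Rx Ry [Nxy _].
  have [_ [_ Np]] := max_prime hT hN.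
  by case: (Np x y (RT _ Rx) (RT _ Ry) Nxy) => h; [left|right]; split.
have hQ : is_maximal_ideal R Q.
  by apply: (prime_max hAD hQp (_ : Q t) t0); split=> //; exact: PR.
have QP : Q <> P.
  move=> eQ.
  have PN : P `<=` N by move=> x Px; rewrite -eQ in Px; case: Px.
  have PTN : PT `<=` N by apply: ig_min.
  case: (PTmax N hNI PTN) => eN; last first.
    by apply: N1; rewrite eN; exact: sr1.
  have TRP : forall z, T z -> z = 0 \/ 0 <= v z.
    move=> x Tx; apply/(locE hR hP hv); apply: contrapT => nx.
    have x0 : x != 0.
      by apply/eqP => e; apply: nx; apply/(locE hR hP hv); left.
    have vx : v x < 0.
      by case: (ltP (v x) 0) => // h; exfalso; apply: nx; apply/(locE hR hP hv); right.
    have ix0 : x^-1 != 0 by rewrite invr_eq0.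
    have vix : v x^-1 = - v x.
      by have := vdiv hR hP hv (oner_neq0 K) x0; rewrite div1r (v1 hR hP hv) sub0r.
    have : localization R P x^-1 by apply/(locE hR hP hv); right; lia.
    move=> [p [sg [Rp [Rsg [Psg e]]]]].
    have sg0 : sg != 0 by apply/eqP => e'; apply: Psg; rewrite e'.
    have p0 : p != 0 by apply: contraNneq ix0 => p0; rewrite e p0 mul0r.
    have Pp : P p.
      apply: contrapT => Pp; have := vdiv hR hP hv p0 sg0.
      rewrite -e vix (vnotM hR hP hv Rp Pp) (vnotM hR hP hv Rsg Psg); lia.
    apply: Psg; apply: PTRP => //.
    have -> : sg = x * p.
      have := congr1 (fun z => z * x * sg) e; rewrite mulVf // mul1r => ->.
      by field.
    exact: PTmul _ _ Tx (PPT _ Pp).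
  have I1 := ideal_k (k := 1) hv isT hT TRP.
  have I2 := ideal_k (k := 2) hv isT hT TRP.
  have PTI1 : PT `<=` [set z | T z /\ (z = 0 \/ 1 <= v z)].
    apply: ig_min => // x Px; split; first by apply: RT; exact: PR.
    case: (eqVneq x 0) => [->|x0]; [by left|right; exact: (vM hR hP hv)].
  have sqI2 : ideal_sq T PT `<=` [set z | T z /\ (z = 0 \/ 2 <= v z)].
    apply: ig_min => // x [a [b [PTa [PTb ->]]]].
    have [Ta ha] := PTI1 _ PTa; have [Tb hb] := PTI1 _ PTb.
    split; first exact: (srM hT Ta Tb).
    case: ha => [->|ha]; first by left; rewrite mul0r.
    case: hb => [->|hb]; first by left; rewrite mulr0.
    case: (eqVneq a 0) => [->|a0]; first by left; rewrite mul0r.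
    case: (eqVneq b 0) => [->|b0]; first by left; rewrite mulr0.
    have [hm _] := hv; right; rewrite hm //; lia.
  have : ideal_sq T PT t.
    rewrite -eN; apply: hsq; apply: ig_sub; by rewrite /= in_cons eqxx.
  move=> /sqI2 [_ [/eqP|]]; first by rewrite (negbTE t0).
  rewrite vt1; lia.
have DQ : Dv Q.
  apply: hcl => //; apply: (meet Q N hQ).
  - by move=> x [].
  - by move=> x a Tx Na; apply: NM.
  - by move=> x Nx Rx; split.
have UQ : U Q.
  apply: hs; first by apply: max_prime.
  move=> x xs; split; [apply: sN; by rewrite in_cons xs orbT|exact: sR].
by exists Q.
Qed.

End H.

Unset Implicit Arguments.
Set Strict Implicit.

Theorem lemma5p4 (K : fieldType) (R : set K)
  (hR : almost_dedekind R) (hK : is_quotient_field_of R)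
  (W : Type) (lt : W -> W -> Prop) (hW : is_wellorder lt)
  (C D : W -> set (set K))
  (hC : crit_seq R lt C) (hD : deriv_seq R lt D) (a : W) :
  C a `<=` D a.
Proof.
have [_ [_ [_ hwf]]] := hW.
suff: forall w, C w `<=` Max R /\ closedM R (D w) /\ C w `<=` D w.
  by move/(_ a) => [_ [_ h]].
elim/(well_founded_ind hwf) => w IH.
have cls : is_zero lt w \/ (exists v, is_succ_of lt v w) \/ is_limit lt w.
  case: (pselect (is_zero lt w)) => hz; [by left|right].
  case: (pselect (exists v, is_succ_of lt v w)) => hs; [by left|right].
  split=> // v hv; apply: hs; by exists v.
have [hC0 [hCs hCl]] := hC w; have [hD0 [hDs hDl]] := hD w.
case: cls => [hz|[[v hv]|hl]].
- rewrite (hC0 hz) (hD0 hz); split=> //; split=> // P hP _.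
- have [IC [ID ICD]] := IH v hv.1.
  rewrite (hCs v hv) (hDs v hv); split; first by move=> P [].
  split.
    move=> P hP hU; split.
      apply: ID => // U hU' UP; have [y [[Dy _] Uy]] := hU U hU' UP; by exists y.
    move=> U hU' UP; have [y [[Dy hy] Uy]] := hU U hU' UP.
    case: (pselect (y = P)) => [e|ne]; last by exists y.
    by rewrite e in hy; apply: hy.
  move=> P [hP hcr]; exact: succ_step hR IC ICD ID hP hcr.
- have [nz _] := hl.
  have [u lu] : exists u, lt u w.
    apply: contrapT => h; apply: nz => u lu; apply: h; by exists u.
  rewrite (hCl hl) (hDl hl); split.
    by move=> P hP; apply: (IH u lu).1; exact: hP u lu.
  split.
    move=> P hP hU v lvw; apply: (IH v lvw).2.1 => // U hU' UP.
    have [y [hy Uy]] := hU U hU' UP; exists y; split=> //; exact: hy v lvw.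
  by move=> P hP v lvw; apply: (IH v lvw).2.2; exact: hP v lvw.
Qed.
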